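(* For every item sequence $I\in(0,1]^n$, $MM_2(I)=OPT_2(I)$.
   Context: The $k$-cardinality constrained bin packing problem: an item sequence $I=(a_1,\dots,a_n)\in(0,1]^n$ must be packed into bins of capacity $1$ so that each bin contains at most $k$ items; $OPT_k(I)$ is the minimum possible number of non-empty bins, and $ALG(I)$ is the number of non-empty bins used by algorithm $ALG$. Algorithm $MM_k$: sort the items in non-increasing order; keep a single open bin with load $S$. Repeat while items remain: if the open bin already contains $k$ items, close it and open a new bin; else if the head (largest remaining) item fits ($S+\text{head}\le1$) pack it; else if the tail (smallest remaining) item fits pack it; else close the open bin permanently and open a new empty bin. $MM_2$ is the case $k=2$. *)

(* Defs.v *)
From HB Require Import structures.
From mathcomp Require Import all_boot all_order all_algebra.
Set Implicit Arguments. Unset Strict Implicit. Unset Printing Implicit Defensive.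
Import Order.TTheory GRing.Theory Num.Theory.
Local Open Scope ring_scope.

Section BinPacking.
Variable R : realFieldType.

(* One run of the main loop of MM_k, with fuel.
   [s]   : remaining items, sorted non-increasingly (head = largest, last = smallest)
   [cnt] : number of items in the open bin,  [S] : load of the open bin.
   Returns the number of non-empty bins used from now on (including the open one). *)
Fixpoint mm_loop (k : nat) (fuel : nat) (s : seq R) (cnt : nat) (S : R) : nat :=
  match fuel with
  | 0 => 0
  | fuel'.+1 =>
    match s with
    | [::] => (0 < cnt)%N
    | h :: _ =>
      if cnt == k then ((0 < cnt)%N + mm_loop k fuel' s 0 0)%N
      else if S + h <= 1 then mm_loop k fuel' (behead s) cnt.+1 (S + h)
      else let t := last h s in
        if S + t <= 1 then mm_loop k fuel' (take (size s).-1 s) cnt.+1 (S + t)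
        else ((0 < cnt)%N + mm_loop k fuel' s 0 0)%N
    end
  end.

(* MM_k(I): sort non-increasingly, then run the loop.  Each iteration either
   packs an item or closes a non-empty bin, so 2n+2 iterations suffice. *)
Definition MM (k : nat) (I : seq R) : nat :=
  mm_loop k (2 * size I).+2 (sort (fun x y : R => y <= x) I) 0 0.

(* A packing of the items of I assigns to each item (index i < n) a bin label
   in 'I_n (n bins always suffice).  It is k-feasible if every bin has at most
   k items and total size at most 1. *)
Definition feasible (k : nat) (I : seq R)
    (f : {ffun 'I_(size I) -> 'I_(size I)}) : bool :=
  [forall b : 'I_(size I),
     (#|[set i | f i == b]| <= k)%N && (\sum_(i | f i == b) I`_i <= 1)].

Definition nbins (n : nat) (f : {ffun 'I_n -> 'I_n}) : nat := #|f @: setT|.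

Definition OPT (k : nat) (I : seq R) : nat :=
  \big[minn/size I]_(f : {ffun 'I_(size I) -> 'I_(size I)} | @feasible k I f) nbins f.

End BinPacking.
Arguments feasible {R} k I f.
Arguments OPT {R} k I.
Arguments MM {R} k I.

(* Main.v *)
Require Import Defs.
From HB Require Import structures.
From mathcomp Require Import all_boot all_order all_algebra zify ring lra.
Import Order.TTheory GRing.Theory Num.Theory.
Local Open Scope ring_scope.
Set Implicit Arguments. Unset Strict Implicit. Unset Printing Implicit Defensive.

Section MMProof.
Variable R : realFieldType.

Lemma mm_nil k fuel : @mm_loop R k fuel [::] 0 0 = 0%N.
Proof. by case: fuel. Qed.

Lemma mm_close fuel (s : seq R) S :
  mm_loop 2 fuel.+1 s 2 S = (mm_loop 2 fuel s 0 0).+1.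
Proof. by case: s => [|x s] //=; rewrite mm_nil. Qed.

Lemma mm_cons0 fuel (h : R) s : h <= 1 ->
  mm_loop 2 fuel.+1 (h :: s) 0 0 = mm_loop 2 fuel s 1 h.
Proof. by move=> hh; rewrite /= add0r hh. Qed.

Lemma mm_cons1 fuel (h : R) s S : mm_loop 2 fuel.+1 (h :: s) 1 S =
  if S + h <= 1 then mm_loop 2 fuel s 2 (S + h)
  else if S + last h s <= 1 then
    mm_loop 2 fuel (take (size s) (h :: s)) 2 (S + last h s)
  else (mm_loop 2 fuel (h :: s) 0 0).+1.
Proof. by []. Qed.

Lemma mm_step (T : Type) (w : T -> R) (a : T) (t' : seq T) (fuel : nat) :
  ((2 * size t').+3 <= fuel)%N -> w a <= 1 ->
  exists r fuel', [/\ ((2 * size r).+1 <= fuel')%N,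
     mm_loop 2 fuel (map w (a :: t')) 0 0 = (mm_loop 2 fuel' (map w r) 0 0).+1 &
     [\/ exists c, t' = c :: r /\ w a + w c <= 1,
         exists c, t' = rcons r c /\ w a + w c <= 1 |
         r = t' /\ (t' = [::] \/ 1 < w a + w (last a t'))]].
Proof.
move=> hf ha; case: fuel hf => [|[|[|f]]] // hf.
change (map w (a :: t')) with (w a :: map w t'); rewrite mm_cons0 //.
case: t' hf => [|c t2] hf.
  by exists [::], 1%N; split => //; constructor 3; split => //; left.
change (map w (c :: t2)) with (w c :: map w t2); rewrite mm_cons1.
case h1: (w a + w c <= 1).
  rewrite mm_close; exists t2, f; split => //; last by constructor 1; exists c.
  move: hf; rewrite /= !mulnS; lia.
rewrite last_map.
case h2: (w a + w (last c t2) <= 1).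
  rewrite size_map; change (w c :: map w t2) with (map w (c :: t2)).
  rewrite [in map w _](lastI c t2) map_rcons -cats1 take_size_cat ?size_map ?size_belast //.
  rewrite mm_close; exists (belast c t2), f; split => //.
    move: hf; rewrite size_belast /= !mulnS; lia.
  by constructor 2; exists (last c t2); rewrite -lastI.
exists (c :: t2), f.+1; split.
- move: hf; rewrite /= !mulnS; lia.
- by [].
- constructor 3; split => //; right; by rewrite ltNge h2.
Qed.

Section Comb.
Variable T : finType.
Variable w : T -> R.
Hypothesis hw0 : forall i, 0 <= w i.
Hypothesis hw1 : forall i, w i <= 1.

Definition pack (f : T -> T) (t : seq T) := forall b,
  (count (fun i => f i == b) t <= 2)%N /\ \sum_(i <- t | f i == b) w i <= 1.

Lemma sum_ge0 (s : seq T) (P : pred T) : 0 <= \sum_(i <- s | P i) w i.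
Proof. by apply: sumr_ge0 => i _. Qed.

Lemma sum_sub (s : seq T) (P Q : pred T) : (forall i, P i -> Q i) ->
  \sum_(i <- s | P i) w i <= \sum_(i <- s | Q i) w i.
Proof.
move=> hPQ; elim: s => [|x s IH]; first by rewrite !big_nil.
rewrite !big_cons; case hP: (P x); first by rewrite (hPQ _ hP) lerD2l.
case: (Q x) => //; have := hw0 x; lra.
Qed.

Lemma sum_eq_in (s : seq T) (P Q : pred T) : {in s, forall i, P i = Q i} ->
  \sum_(i <- s | P i) w i = \sum_(i <- s | Q i) w i.
Proof.
elim: s => [|x s IH] h; first by rewrite !big_nil.
rewrite !big_cons h ?mem_head // IH //.
move=> i hi; apply: h; by rewrite in_cons hi orbT.
Qed.

Lemma sum_elem (s : seq T) (P : pred T) i : i \in s -> P i ->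
  w i <= \sum_(j <- s | P j) w j.
Proof.
elim: s => [|x s IH] //; rewrite in_cons big_cons => /orP [/eqP -> hP|hi hP].
  by rewrite hP lerDl sum_ge0.
case: (P x); last by apply: IH.
have := IH hi hP; have := hw0 x; lra.
Qed.

Lemma sum_count_max (s : seq T) (P : pred T) M : (forall i, i \in s -> w i <= M) ->
  \sum_(i <- s | P i) w i <= M *+ count P s.
Proof.
elim: s => [|x s IH] h; first by rewrite big_nil mulr0n.
have IH' : \sum_(i <- s | P i) w i <= M *+ count P s.
  by apply: IH => i hi; apply: h; rewrite in_cons hi orbT.
have hx := h x (mem_head _ _).
rewrite big_cons /=; case: (P x) => /=; last by rewrite add0n.
by rewrite add1n mulrS lerD.
Qed.

Lemma sum_or (s : seq T) (P Q : pred T) : (forall i, ~~ (P i && Q i)) ->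
  \sum_(i <- s | P i || Q i) w i = \sum_(i <- s | P i) w i + \sum_(i <- s | Q i) w i.
Proof.
move=> h; elim: s => [|x s IH]; first by rewrite !big_nil addr0.
rewrite !big_cons IH; move: (h x); case: (P x); case: (Q x) => //= _.
  by rewrite addrA.
by rewrite addrCA.
Qed.

Lemma count_or (s : seq T) (P Q : pred T) : (forall i, ~~ (P i && Q i)) ->
  count (fun i => P i || Q i) s = (count P s + count Q s)%N.
Proof.
move=> h; elim: s => [|x s IH] //=; rewrite IH; move: (h x).
case: (P x); case: (Q x) => //= _; lia.
Qed.

Lemma count_const (s : seq T) (c : bool) : count (fun _ => c) s = if c then size s else 0%N.
Proof. by case: c; elim: s => //= x s ->. Qed.

Lemma pack_cons f x s : pack f (x :: s) -> pack f s.
Proof.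
move=> h b; have [h1 h2] := h b; split.
  by apply: leq_trans _ h1; rewrite /= leq_addl.
move: h2; rewrite big_cons; case: (f x == b) => //; have := hw0 x; have := sum_ge0 s (fun i => f i == b); lra.
Qed.

Lemma pack_perm f s1 s2 : perm_eq s1 s2 -> pack f s1 -> pack f s2.
Proof.
move=> hp h b; have [h1 h2] := h b; split; first by rewrite -(permP hp).
by rewrite -(perm_big _ hp).
Qed.

Lemma pack_ext f1 f2 s : f1 =1 f2 -> pack f1 s -> pack f2 s.
Proof.
move=> e h b; have [h1 h2] := h b; split.
  by rewrite (@eq_count _ _ (fun i => f1 i == b)) // => i /=; rewrite e.
by rewrite (@eq_bigl _ _ _ _ _ _ (fun i => f1 i == b)) // => i /=; rewrite e.
Qed.

Lemma card_lt (g f : T -> T) (s' s : seq T) x : x \in map f s ->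
  (forall i, i \in s' -> (g i \in map f s) && (g i != x)) ->
  (#|map g s'| < #|map f s|)%N.
Proof.
move=> hx h; rewrite (cardD1 x (mem (map f s))) hx add1n ltnS.
apply: subset_leq_card; apply/subsetP => y /mapP [i hi ->].
have /andP [h1 h2] := h i hi; by rewrite !inE h2 h1.
Qed.

Lemma exchange f a c r : uniq [:: a, c & r] -> pack f [:: a, c & r] ->
  (forall y, y \in r -> w y <= w a) ->
  exists f', pack f' r /\ (#|map f' r| < #|map f [:: a, c & r]|)%N.
Proof.
move=> hu hp hmax.
have hpr := pack_cons (pack_cons hp).
exists (fun i => if f i == f a then f c else f i); split; last first.
  apply: (card_lt (x := f a)); first by rewrite map_f ?mem_head.
  move=> i hi; case: ifP => hia.
    have hca : f c != f a.
      apply/negP => /eqP hca; have [h1 _] := hp (f a); move: h1.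
      rewrite /= eqxx hca eqxx /=.
      have : (0 < count (fun j => f j == f a) r)%N.
        by rewrite -has_count; apply/hasP; exists i.
      lia.
    by rewrite hca andbT map_f // !inE eqxx orbT.
  by rewrite hia andbT map_f // !inE hi !orbT.
move=> b; case hca: (f c == f a).
  apply: (pack_ext (f1 := f)) hpr b => i; case: ifP => // /eqP ->; apply/eqP; by rewrite eq_sym.
have [ha1 ha2] := hp (f a); have [hc1 hc2] := hp (f c).
move: ha1 ha2 hc1 hc2; rewrite /= !big_cons eqxx hca eq_sym hca eqxx /= => ha1 ha2 hc1 hc2.
case hbc: (b == f c).
  move/eqP: hbc => ->.
  have e : forall i, ((if f i == f a then f c else f i) == f c) = (f i == f a) || (f i == f c).
    by move=> i; case: ifP => _; rewrite ?eqxx.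
  have hdis : forall i, ~~ ((f i == f a) && (f i == f c)).
    move=> i; apply/negP => /andP [/eqP -> /eqP e2]; by rewrite e2 eqxx in hca.
  rewrite (eq_count e) (eq_bigl _ _ e) count_or // sum_or //; split; first by lia.
  have := sum_count_max (fun i => f i == f c) hmax.
  move: hc1; case: (count _ r) => [|[|]] // _; rewrite ?mulr0n ?mulr1n => hs.
    have := hw0 a; lra.
  lra.
have hsub : forall i, ((if f i == f a then f c else f i) == b) -> f i == b.
  move=> i; case: ifP => // _ /eqP e; by rewrite e eqxx in hbc.
have [hb1 hb2] := hpr b; split.
  by apply: leq_trans (sub_count hsub r) hb1.
by apply: le_trans (sum_sub r hsub) hb2.
Qed.

Lemma alone f a t' : pack f (a :: t') -> (forall y, y \in t' -> 1 < w a + w y) ->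
  pack f t' /\ (#|map f t'| < #|map f (a :: t')|)%N.
Proof.
move=> hp h; split; first exact: pack_cons hp.
apply: (card_lt (x := f a)); first by rewrite map_f ?mem_head.
move=> i hi; rewrite map_f ?inE ?hi ?orbT //=.
apply/negP => /eqP hia; have [_ h2] := hp (f a); move: h2; rewrite big_cons eqxx.
have := sum_elem (P := fun j => f j == f a) hi (introT eqP hia); have := h i hi; lra.
Qed.

Definition geW := fun i j : T => w j <= w i.

Lemma ge_trans : transitive geW.
Proof. move=> x y z; rewrite /geW => h1 h2; exact: le_trans h2 h1. Qed.

Lemma path_last (x : T) s : path geW x s -> forall y, y \in x :: s -> w (last x s) <= w y.
Proof.
elim: s x => [|z s IH] x /=.
  by move=> _ y; rewrite inE => /eqP ->.
move=> /andP [hxz hp] y; rewrite inE => /orP [/eqP -> | hy]; last exact: IH.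
by apply: le_trans (IH z hp z (mem_head _ _)) hxz.
Qed.



Lemma lower n : forall t fuel, (size t <= n)%N -> uniq t -> sorted geW t ->
  ((2 * size t).+1 <= fuel)%N -> forall f, pack f t ->
  (mm_loop 2 fuel (map w t) 0 0 <= #|map f t|)%N.
Proof.
elim: n => [|n IH] [|a t'] fuel //= hs hu hso hf g hp; try by rewrite mm_nil.
have hf3 : ((2 * size t').+3 <= fuel)%N by move: hf; rewrite mulnS add2n.
have [r [fuel' [hf' -> hcase]]] := mm_step hf3 (hw1 a).
have hall : forall y, y \in t' -> w y <= w a.
  by move=> y hy; exact: (allP (order_path_min ge_trans hso)) y hy.
have hsorted : sorted geW (a :: t') := hso.
case: hcase => [[c [et _]] | [c [et _]] | [er hlast]].
- subst t'.
  have hu' : uniq [:: a, c & r] := hu.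
  have hm : forall y, y \in r -> w y <= w a by move=> y hy; apply: hall; rewrite inE hy orbT.
  have [g' [hp' hlt]] := exchange hu' hp hm.
  apply: leq_ltn_trans hlt.
  apply: IH hf' g' hp'; first by move: hs => /=; lia.
    by move: hu => /= /andP [_ /andP [_ ->]].
  exact: path_sorted (path_sorted hso).
- have hperm : perm_eq (a :: t') [:: a, c & r] by rewrite et perm_cons perm_rcons.
  have hu' : uniq [:: a, c & r] by rewrite -(perm_uniq hperm) /= hu.
  have hp' := pack_perm hperm hp.
  have hm : forall y, y \in r -> w y <= w a.
    by move=> y hy; apply: hall; rewrite et mem_rcons inE hy orbT.
  have [g' [hpg hlt]] := exchange hu' hp' hm.
  rewrite (eq_card (perm_mem (perm_map g hperm))).
  apply: leq_ltn_trans hlt.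
  have hsub : subseq r (a :: t').
    by rewrite et; apply: subseq_trans (subseq_rcons r c) (subseq_cons _ a).
  apply: IH hf' g' hpg.
  + by move: hs; rewrite et size_rcons ltnS => /ltnW.
  + by apply: subseq_uniq hsub _; rewrite /= hu.
  + apply: (subseq_sorted _ hsub hsorted); exact: ge_trans.
- subst r.
  have hy : forall y, y \in t' -> 1 < w a + w y.
    move=> y hy; case: hlast => [et|hl]; first by rewrite et in hy.
    have := path_last hso (y := y); rewrite inE hy orbT => /(_ isT).
    lra.
  have [hp' hlt] := alone hp hy.
  apply: leq_ltn_trans hlt.
  apply: (IH _ _ _ _ _ hf' g hp').
  + by move: hs; rewrite ltnS.
  + by move: hu => /andP [].
  + exact: path_sorted hso.
Qed.

Lemma mm_size n : forall t fuel, (size t <= n)%N ->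
  ((2 * size t).+1 <= fuel)%N -> (mm_loop 2 fuel (map w t) 0 0 <= size t)%N.
Proof.
elim: n => [|n IH] [|a t'] fuel //= hs hf; try by rewrite mm_nil.
have hf3 : ((2 * size t').+3 <= fuel)%N by move: hf; rewrite mulnS add2n.
have [r [fuel' [hf' -> hcase]]] := mm_step hf3 (hw1 a).
rewrite ltnS.
have hr : (size r <= size t')%N.
  by case: hcase => [[c [-> _]] | [c [-> _]] | [-> _]]; rewrite ?size_rcons /= ?leqnSn.
apply: (leq_trans _ hr); apply: (IH _ _ _ hf').
by apply: (leq_trans hr); rewrite -ltnS.
Qed.

Lemma addbin f0 a B r : uniq (a :: B ++ r) -> (size B <= 1)%N ->
  w a + \sum_(i <- B) w i <= 1 -> {in r, forall i, f0 i \in r} -> pack f0 r ->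
  exists f, [/\ {in a :: B ++ r, forall i, f i \in a :: B ++ r},
    pack f (a :: B ++ r) & (#|map f (a :: B ++ r)| <= #|map f0 r|.+1)%N].
Proof.
move=> hu hB hsum hin hp.
have : uniq ((a :: B) ++ r) := hu.
rewrite cat_uniq => /and3P [huB hdis hur].
have hnot : forall i, i \in r -> i \notin a :: B.
  move=> i hi; apply: contra hdis => h; apply/hasP; by exists i.
have har : a \notin r by apply: contra (hnot a) _; rewrite mem_head.
exists (fun i => if i \in a :: B then a else f0 i); split.
- move=> i hi; case: ifP => hiB; first by rewrite mem_head.
  have hir : i \in r by move: hi; rewrite -cat_cons mem_cat hiB.
  by rewrite -cat_cons mem_cat (hin i hir) orbT.
- move=> b.
  set P := fun i => (if i \in a :: B then a else f0 i) == b.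
  have hc : count P (a :: B ++ r) = (count P (a :: B) + count P r)%N by rewrite -count_cat.
  have hs : \sum_(i <- a :: B ++ r | P i) w i =
    \sum_(i <- a :: B | P i) w i + \sum_(i <- r | P i) w i by rewrite -big_cat.
  rewrite hc hs {hc hs}.
  have e1 : {in a :: B, forall i, P i = (a == b)}.
    by move=> i hi; rewrite /P hi.
  have e2 : {in r, forall i, P i = (f0 i == b)}.
    by move=> i hi; rewrite /P (negbTE (hnot i hi)).
  rewrite (eq_in_count e1) (eq_in_count e2) (sum_eq_in e1) (sum_eq_in e2) count_const.
  case hab: (a == b).
  + move/eqP: hab => hab; subst b.
    have e3 : {in r, forall i, (f0 i == a) = false}.
      move=> i hi; apply/negbTE; apply: contra har => /eqP <-; exact: hin.
    rewrite (eq_in_count e3) (sum_eq_in e3) count_const big_pred0_eq addr0 addn0.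
    by split => //=; rewrite big_cons.
  + rewrite big_pred0_eq add0r add0n; exact: hp b.
- apply: (@leq_trans #|[predU1 a & mem (map f0 r)]|).
    apply: subset_leq_card; apply/subsetP => y /mapP [i hi ->].
    case: ifP => hiB; first by rewrite !inE eqxx.
    have hir : i \in r by move: hi; rewrite -cat_cons mem_cat hiB.
    rewrite !inE.
    by rewrite map_f ?orbT.
  by rewrite cardU1; case: (a \notin _).
Qed.

Lemma upper n : forall t fuel, (size t <= n)%N -> uniq t ->
  ((2 * size t).+1 <= fuel)%N ->
  exists f, [/\ {in t, forall i, f i \in t}, pack f t &
    (#|map f t| <= mm_loop 2 fuel (map w t) 0 0)%N].
Proof.
elim: n => [|n IH] [|a t'] fuel //= hs hu hf.
- exists id; split => //; first by move=> b; rewrite big_nil ler01.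
  by apply: leq_trans (card_size _) _.
- exists id; split => //; first by move=> b; rewrite big_nil ler01.
  by apply: leq_trans (card_size _) _.
have hf3 : ((2 * size t').+3 <= fuel)%N by move: hf; rewrite mulnS add2n.
have [r [fuel' [hf' -> hcase]]] := mm_step hf3 (hw1 a).
have hsub : subseq r t'.
  case: hcase => [[c [-> _]] | [c [-> _]] | [-> _]].
  + exact: subseq_cons.
  + exact: subseq_rcons.
  + exact: subseq_refl.
have hr : (size r <= n)%N.
  by apply: leq_trans (size_subseq hsub) _; rewrite -ltnS.
have hur : uniq r by apply: subseq_uniq hsub _; move: hu => /andP [].
have [f0 [hin hp hc]] := IH r fuel' hr hur hf'.
case: hcase => [[c [et hac]] | [c [et hac]] | [et hlast]].
- subst t'.
  have hsum : w a + \sum_(i <- [:: c]) w i <= 1 by rewrite big_seq1.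
  have [f [h1 h2 h3]] := addbin (B := [:: c]) hu isT hsum hin hp.
  exists f; split => //; exact: leq_trans h3 _.
- have hperm : perm_eq (a :: t') [:: a, c & r] by rewrite et perm_cons perm_rcons.
  have hu' : uniq [:: a, c & r] by rewrite -(perm_uniq hperm) /= hu.
  have hsum : w a + \sum_(i <- [:: c]) w i <= 1 by rewrite big_seq1.
  have [f [h1 h2 h3]] := addbin (B := [:: c]) hu' isT hsum hin hp.
  exists f; split.
  + move=> i; rewrite !(perm_mem hperm) => hi; exact: h1.
  + have hperm' : perm_eq [:: a, c & r] (a :: t') by rewrite perm_sym.
    exact: pack_perm hperm' h2.
  + rewrite (eq_card (perm_mem (perm_map f hperm))); exact: leq_trans h3 _.
- subst r.
  have hsum : w a + \sum_(i <- [::]) w i <= 1 by rewrite big_nil addr0.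
  have [f [h1 h2 h3]] := addbin (B := [::]) hu isT hsum hin hp.
  exists f; split => //; exact: leq_trans h3 _.
Qed.
End Comb.
End MMProof.

Lemma bigmin_le (X : eqType) (s : seq X) (P : pred X) (F : X -> nat) x0 y :
  y \in s -> P y -> (\big[minn/x0]_(i <- s | P i) F i <= F y)%N.
Proof.
elim: s => // z s IH; rewrite inE big_cons => /orP [/eqP -> -> | hy hP].
  exact: geq_minl.
case: (P z); last exact: IH.
exact: leq_trans (geq_minr _ _) (IH hy hP).
Qed.

Theorem theorem7 (R : realFieldType) (I : seq R)
  (hI : all (fun a => (0 < a) && (a <= 1)) I) :
  MM 2 I = OPT 2 I.
Proof.
pose w := fun i : 'I_(size I) => I`_i.
have hw : forall i : 'I_(size I), (0 < w i) && (w i <= 1).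
  by move=> i; exact: (all_nthP 0 hI) i (ltn_ord i).
have hw0 : forall i, 0 <= w i by move=> i; case/andP: (hw i) => /ltW.
have hw1 : forall i, w i <= 1 by move=> i; case/andP: (hw i).
pose ts := sort (fun i j : 'I_(size I) => w j <= w i) (enum 'I_(size I)).
have eI : map w (enum 'I_(size I)) = I.
  have -> : map w (enum 'I_(size I)) = map (nth 0 I) (map val (enum 'I_(size I))).
    by rewrite -map_comp.
  by rewrite val_enum_ord map_nth_iota0 // take_size.
have eS : sort (fun x y : R => y <= x) I = map w ts by rewrite -{1}eI sort_map.
have hperm : perm_eq ts (index_enum 'I_(size I)).
  apply: uniq_perm; first by rewrite sort_uniq enum_uniq.
    exact: index_enum_uniq.
  by move=> i; rewrite mem_sort mem_enum mem_index_enum.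
have hts : size ts = size I by rewrite size_sort size_enum_ord.
have hut : uniq ts by rewrite sort_uniq enum_uniq.
have hst : sorted (geW w) ts := sort_sorted (fun i j => le_total (w j) (w i)) _.
have feasE : forall g : {ffun 'I_(size I) -> 'I_(size I)},
    feasible 2 I g <-> pack w (fun i => g i) ts.
  move=> g; rewrite /feasible.
  have hc : forall b, #|[set i | g i == b]| = count (fun i => g i == b) ts.
    move=> b; rewrite -sum1_count (perm_big _ hperm) -sum1_card.
    by apply: eq_bigl => i; rewrite inE.
  have hs : forall b, \sum_(i | g i == b) I`_i = \sum_(i <- ts | g i == b) w i.
    by move=> b; rewrite (perm_big _ hperm).
  split.
    move/forallP => h b; have := h b; by rewrite hc hs => /andP [-> ->].
  move=> h; apply/forallP => b; have [h1 h2] := h b; by rewrite hc hs h1 h2.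
have nbE : forall g : {ffun 'I_(size I) -> 'I_(size I)}, nbins g = #|map (fun i => g i) ts|.
  move=> g; rewrite /nbins; apply: eq_card => y.
  apply/imsetP/mapP => [[i _ ->]|[i _ ->]]; exists i => //.
  by rewrite mem_sort mem_enum.
have hf : ((2 * size ts).+1 <= (2 * size I).+2)%N by rewrite hts.
rewrite /MM eS.
apply/eqP; rewrite eqn_leq; apply/andP; split.
- rewrite /OPT; apply: (big_ind (fun x => (_ <= x)%N)).
  + by have := mm_size hw1 (leqnn _) hf; rewrite hts.
  + by move=> x y hx hy; rewrite leq_min hx hy.
  + move=> g /feasE hp; rewrite nbE; exact: lower hw0 hw1 _ _ _ (leqnn _) hut hst hf _ hp.
- have [f [_ hp hc]] := upper hw1 (leqnn _) hut hf.
  pose g := [ffun i => f i].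
  have hg : feasible 2 I g.
    by apply/feasE; apply: pack_ext hp => i; rewrite ffunE.
  rewrite /OPT. apply: (leq_trans (@bigmin_le _ _ (fun f => feasible 2 I f) (fun f => nbins f) (size I) _ (mem_index_enum g) hg)).
  rewrite nbE; apply: leq_trans _ hc.
  by rewrite (eq_map (g := f)) // => i; rewrite ffunE.
Qed.
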